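(* Let $\mathcal{X},\mathcal{Y}$ be finite sets, $P_X$ a probability distribution on $\mathcal{X}$, $d:\mathcal{X}\times\mathcal{Y}\to[0,\infty)$ a distortion function with $d(x,y)\le d_{max}$ for all $x,y$, and $Q_Y$ a probability distribution on $\mathcal{Y}$. Let $R\ge 0$ be such that $e^R$ is an integer, $M=e^R+1$, $X\sim P_X$, and $Y_0,\dots,Y_{M-1}$ i.i.d. $\sim Q_Y$ independent of $X$. Then for every $\lambda<R$, $$\mathbb{E}\Big[\min_i d(X,Y_i)\Big]\le \tilde D\big(e^{-(R-\lambda)},Q_Y\big)+\Big(\tilde D(1,Q_Y)-\tilde D\big(e^{-(R-\lambda)},Q_Y\big)\Big)e^{-e^{\lambda}}(e^{\lambda}+1)\le \tilde D\big(e^{-(R-\lambda)},Q_Y\big)+d_{max}\, e^{-e^{\lambda}}(e^{\lambda}+1).$$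
   Context: For $x\in\mathcal{X}$, $y\in\mathcal{Y}$, $u\in[0,1]$ let $p_{c,x,y,u}=Q_Y\{y': d(x,y')<d(x,y)\}+u\cdot Q_Y\{y': d(x,y')=d(x,y)\}$. For $w\in(0,1]$ define $\tilde D(w,Q_Y)=w^{-1}\,\mathbb{E}[d(X,Y)\mathbf{1}\{p_{c,X,Y,U}\le w\}]$, where $X\sim P_X$, $Y\sim Q_Y$, $U$ uniform on $[0,1]$ are independent. *)

(* Defs.v *)
From HB Require Import structures.
From mathcomp Require Import all_boot all_order all_algebra.
From mathcomp Require Import all_classical all_reals all_analysis.
Set Implicit Arguments. Unset Strict Implicit. Unset Printing Implicit Defensive.
Import Order.TTheory GRing.Theory Num.Theory.
Local Open Scope classical_set_scope.
Local Open Scope ring_scope.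

Definition is_pmf (R : realType) (T : finType) (P : T -> R) : Prop :=
  (forall t, 0 <= P t) /\ \sum_(t : T) P t = 1.

Definition pc (R : realType) (X Y : finType) (QY : Y -> R) (d : X -> Y -> R)
  (x : X) (y : Y) (u : R) : R :=
  \sum_(y' : Y | d x y' < d x y) QY y' + u * \sum_(y' : Y | d x y' == d x y) QY y'.

(* Dtilde(w, Q_Y) = w^-1 E[d(X,Y) 1{p_{c,X,Y,U} <= w}],
   X ~ P_X, Y ~ Q_Y, U ~ Unif[0,1] independent. The expectation over the
   finite variables is a finite sum, the one over U a Lebesgue integral on [0,1]. *)
Definition Dtilde (R : realType) (X Y : finType) (PX : X -> R) (QY : Y -> R)
  (d : X -> Y -> R) (w : R) : R :=
  w^-1 * \sum_(x : X) \sum_(y : Y) PX x * QY y *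
    Rintegral (@lebesgue_measure R) `[0%R, 1%R]
      (fun u : R => d x y * (if pc QY d x y u <= w then 1 else 0)).

(* E[min_i d(X, Y_i)] with X ~ P_X, Y_0..Y_{M-1} iid ~ Q_Y independent of X,
   here M = m.+1. *)
Definition Emin (R : realType) (X Y : finType) (PX : X -> R) (QY : Y -> R)
  (d : X -> Y -> R) (m : nat) : R :=
  \sum_(x : X) \sum_(ys : {ffun 'I_m.+1 -> Y})
    PX x * (\prod_(i < m.+1) QY (ys i)) *
    \big[Num.min/d x (ys ord0)]_(i < m.+1) d x (ys i).

(* Main.v *)
Require Import Defs.
From HB Require Import structures.
From mathcomp Require Import all_boot all_order all_algebra.
From mathcomp Require Import all_classical all_reals all_analysis.
From mathcomp Require Import ring lra.
Import Order.TTheory GRing.Theory Num.Theory.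
Set Implicit Arguments. Unset Strict Implicit. Unset Printing Implicit Defensive.
Local Open Scope ring_scope.

Section rint.
Local Open Scope classical_set_scope.
Local Open Scope ring_scope.
Lemma rint_formula (R : realType) (c a b w : R) : 0 < b ->
  Rintegral (@lebesgue_measure R) `[0%R, 1%R]
      (fun u : R => c * (if a + u * b <= w then 1 else 0))
  = c * Num.max 0 (Num.min 1 ((w - a) / b)).
Proof.
move=> b0.
set S := [set u : R | a + u * b <= w].
have -> : Rintegral (@lebesgue_measure R) `[0%R, 1%R]
      (fun u : R => c * (if a + u * b <= w then 1 else 0)) =
   Rintegral (@lebesgue_measure R) (`[0%R, 1%R] `&` S) (fun _ => c).
  rewrite Rintegral_mkcondr; apply: eq_Rintegral => u _.
  rewrite patchE; case: (boolP (u \in S)) => H.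
    by move: H => /set_mem; rewrite /S /= => ->; rewrite mulr1.
  have : ~ S u by move=> h; move/negP: H; apply; exact: mem_set.
  by rewrite /S /=; case: ifPn => // h; rewrite mulr0.
have -> : `[0%R, 1%R] `&` S = [set` `[0%R, Num.min 1 ((w - a) / b)]].
  apply/seteqP; split => u /=; rewrite !in_itv /= ?le_min.
    move=> [/andP[-> ->]]; rewrite /S /= => h; rewrite ler_pdivlMr // lerBrDl.
    exact: h.
  move=> /andP[-> /andP[-> h]]; split => //; rewrite /S /=.
  by move: h; rewrite ler_pdivlMr // lerBrDl mulrC.
rewrite Rintegral_cst; last exact: measurable_itv.
set m := Num.min 1 ((w - a) / b).
congr (_ * _).
have H : fine (lebesgue_measure (`[0, m]%classic : set R)) = Num.max 0 m.
  rewrite lebesgue_measure_itv /= lte_fin; case: ifPn => h /=.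
    by rewrite oppr0 addr0 /= (max_idPr (ltW h)).
  by rewrite (max_idPl _) // leNgt.
exact: H.
Qed.
End rint.

Lemma group_sum (R : realType) (T : finType) (om f : T -> R) (t : seq R) (h : R -> R) :
  uniq t -> (forall x, f x \in t) ->
  \sum_x om x * h (f x) = \sum_(u <- t) (\sum_(x | f x == u) om x) * h u.
Proof.
move=> ut ft.
under [RHS]eq_bigr do rewrite mulr_suml big_mkcond.
rewrite exchange_big /=; apply: eq_bigr => x _.
rewrite -big_mkcond /= -big_filter.
rewrite (eq_filter (a2 := pred1 (f x))); last by move=> u /=; rewrite eq_sym.
by rewrite filter_pred1_uniq // big_seq1.
Qed.

Lemma abel (R : realType) (K B : R -> R) (t : seq R) (a0 m : R) :
  sorted <%R t -> (forall u, u \in t -> 0 <= B u) -> 0 <= a0 ->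
  a0 + \sum_(u <- t) B u = 1 ->
  (forall a, 0 <= a <= 1 -> 0 <= K a) -> K 1 = 0 ->
  (forall u, u \in t -> m <= u) ->
  m * K a0 <= \sum_(u <- t) u * (K (a0 + \sum_(u' <- t | u' < u) B u')
                                 - K (a0 + \sum_(u' <- t | u' < u) B u' + B u)).
Proof.
move=> + + + + K0 K1.
elim: t a0 m => [|u0 r IH] a0 m /= srt B0 a00 sum1 mt.
  by move: sum1; rewrite big_nil addr0 => ->; rewrite K1 mulr0 big_nil.
have Hr : forall u, u \in r -> u0 < u.
  by apply/allP; move: srt; rewrite (path_sortedE lt_trans) => /andP[].
have srtr : sorted <%R r by move: srt; rewrite (path_sortedE lt_trans) => /andP[].
have Bu0 : 0 <= B u0 by apply: B0; rewrite inE eqxx.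
have Br : forall u, u \in r -> 0 <= B u by move=> u ur; apply: B0; rewrite inE ur orbT.
have sr0 : 0 <= \sum_(u <- r) B u by rewrite big_seq; apply: sumr_ge0.
move: sum1; rewrite big_cons => sum1.
rewrite big_cons big_cons ltxx.
have -> : \sum_(j <- r | j < u0) B j = 0.
  rewrite big_seq_cond big_pred0 // => u'; apply/negbTE; rewrite negb_and.
  by case: (boolP (u' \in r)) => //= h; rewrite -leNgt ltW // Hr.
rewrite addr0.
have -> : \sum_(u <- r) u * (K (a0 + \sum_(u' <- (u0 :: r) | u' < u) B u')
   - K (a0 + \sum_(u' <- (u0 :: r) | u' < u) B u' + B u)) =
  \sum_(u <- r) u * (K ((a0 + B u0) + \sum_(u' <- r | u' < u) B u')
   - K ((a0 + B u0) + \sum_(u' <- r | u' < u) B u' + B u)).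
  rewrite big_seq [RHS]big_seq; apply: eq_bigr => u ur.
  by rewrite big_cons Hr // addrA.
have s1' : a0 + B u0 + \sum_(u <- r) B u = 1 by rewrite -addrA.
have IH' := IH (a0 + B u0) u0 srtr Br (addr_ge0 a00 Bu0) s1' (fun u ur => ltW (Hr u ur)).
have Ka0 : 0 <= K a0 by apply: K0; rewrite a00 /=; rewrite -sum1 lerDl addr_ge0.
have mu0 : m <= u0 by apply: mt; rewrite inE eqxx.
apply: (le_trans (y := u0 * K a0)); first by rewrite ler_wpM2r.
move: IH'; set S := \sum_(_ <- _) _ => IH'.
have -> : u0 * K a0 = u0 * (K a0 - K (a0 + B u0)) + u0 * K (a0 + B u0).
  by rewrite -mulrDr subrK.
by rewrite lerD2l.
Qed.

Definition Aq (R : realType) (Y : finType) (q D : Y -> R) (v : R) :=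
  \sum_(y | D y < v) q y.
Definition Bq (R : realType) (Y : finType) (q D : Y -> R) (v : R) :=
  \sum_(y | D y == v) q y.
Definition tl (R : realType) (Y : finType) (D : Y -> R) : seq R :=
  sort <=%O (undup [seq D y | y <- enum Y]).

Lemma tl_uniq (R : realType) (Y : finType) (D : Y -> R) : uniq (tl D).
Proof. by rewrite sort_uniq undup_uniq. Qed.

Lemma tl_sorted (R : realType) (Y : finType) (D : Y -> R) : sorted <%R (tl D).
Proof. by rewrite sort_lt_sorted undup_uniq. Qed.

Lemma mem_tl (R : realType) (Y : finType) (D : Y -> R) y : D y \in tl D.
Proof. by rewrite mem_sort mem_undup; apply: map_f; rewrite mem_enum. Qed.

Lemma tl_mem (R : realType) (Y : finType) (D : Y -> R) u :
  u \in tl D -> exists y, u = D y.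
Proof.
by rewrite mem_sort mem_undup => /mapP[y _ ->]; exists y.
Qed.

Lemma Bq_ge0 (R : realType) (Y : finType) (q D : Y -> R) v :
  (forall y, 0 <= q y) -> 0 <= Bq q D v.
Proof. by move=> q0; apply: sumr_ge0. Qed.

Lemma Aq_tl (R : realType) (Y : finType) (q D : Y -> R) v :
  Aq q D v = \sum_(u <- tl D | u < v) Bq q D u.
Proof.
rewrite /Aq big_mkcond /= (big_mkcond (fun u => u < v)) /=.
transitivity (\sum_y q y * (fun u => (if u < v then 1 else 0)) (D y)).
  by apply: eq_bigr => y _ /=; case: ifP; rewrite ?mulr1 ?mulr0.
rewrite (group_sum (f:=D) q (fun u => (if u < v then 1 else 0)) (tl_uniq D) (@mem_tl _ _ D)).
by apply: eq_bigr => u _; case: ifP; rewrite ?mulr1 ?mulr0.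
Qed.

Lemma sumB (R : realType) (Y : finType) (q D : Y -> R) :
  \sum_y q y = 1 -> \sum_(u <- tl D) Bq q D u = 1.
Proof.
move=> s1; rewrite -s1.
transitivity (\sum_y q y * (fun _ : R => 1) (D y)); last first.
  by apply: eq_bigr => y _; rewrite mulr1.
rewrite (group_sum (f:=D) q (fun _ => 1) (tl_uniq D) (@mem_tl _ _ D)).
by apply: eq_bigr => u _; rewrite mulr1.
Qed.

Lemma sum_prod_pred (R : realType) (Y : finType) (q : Y -> R) (k : nat) (P : pred Y) :
  \sum_(ys : {ffun 'I_k -> Y} | [forall i, P (ys i)]) \prod_(i < k) q (ys i)
  = (\sum_(y | P y) q y) ^+ k.
Proof.
rewrite big_mkcond /=.
transitivity (\sum_(ys : {ffun 'I_k -> Y}) \prod_(i < k) (if P (ys i) then q (ys i) else 0)).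
  apply: eq_bigr => ys _; case: forallP => h.
    by apply: eq_bigr => i _; rewrite h.
  have [i Hi] : exists i, ~~ P (ys i).
    by apply/existsP; rewrite -negb_forall; apply/forallP.
  by rewrite (bigD1 i) //= (negbTE Hi) mul0r.
rewrite -(bigA_distr_bigA (fun (i : 'I_k) (y : Y) => if P y then q y else 0)) /=.
rewrite prodr_const card_ord; congr (_ ^+ _).
by rewrite -big_mkcond.
Qed.

Lemma sum_ge (R : realType) (Y : finType) (q D : Y -> R) u :
  \sum_y q y = 1 -> \sum_(y | u <= D y) q y = 1 - Aq q D u.
Proof.
move=> s1; rewrite -s1 /Aq [in RHS](bigID (fun y => D y < u)) /= addrC addrK.
by apply: eq_bigl => y; rewrite leNgt.
Qed.

Lemma sum_gt (R : realType) (Y : finType) (q D : Y -> R) u :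
  \sum_y q y = 1 -> \sum_(y | u < D y) q y = 1 - (Aq q D u + Bq q D u).
Proof.
move=> s1.
have H : \sum_y q y = Aq q D u + Bq q D u + \sum_(y | u < D y) q y.
  rewrite /Aq /Bq (big_mkcond (fun y => D y < u)) (big_mkcond (fun y => D y == u)) (big_mkcond (fun y => u < D y)) -!big_split /=.
  apply: eq_bigr => y _.
  by case: (ltgtP u (D y)) => h //=; rewrite ?add0r ?addr0.
by rewrite -s1 H; ring.
Qed.

Lemma Ex_formula (R : realType) (Y : finType) (q D : Y -> R) (k : nat) :
  \sum_y q y = 1 ->
  \sum_(ys : {ffun 'I_k.+1 -> Y}) (\prod_(i < k.+1) q (ys i)) *
     \big[Num.min/D (ys ord0)]_(i < k.+1) D (ys i)
  = \sum_(u <- tl D) u * ((1 - Aq q D u) ^+ k.+1 - (1 - (Aq q D u + Bq q D u)) ^+ k.+1).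
Proof.
move=> s1.
set mn := fun ys : {ffun 'I_k.+1 -> Y} => \big[Num.min/D (ys ord0)]_(i < k.+1) D (ys i).
have mnt : forall ys, mn ys \in tl D.
  move=> ys; rewrite /mn; elim/big_ind: _.
  - exact: mem_tl.
  - by move=> a b ha hb; rewrite minEle; case: ifP.
  - by move=> i _; exact: mem_tl.
rewrite (group_sum (f:=mn) (fun ys : {ffun 'I_k.+1 -> Y} => \prod_(i < k.+1) q (ys i)) (fun u => u) (tl_uniq D) mnt).
apply: eq_bigr => u _; rewrite mulrC; congr (_ * _).
have ge : forall ys, (u <= mn ys) = [forall i, u <= D (ys i)].
  move=> ys; apply/bigmin_geP/forallP => [[_ h] i|h]; first exact: h.
  by split => // i _; exact: h.
have gt : forall ys, (u < mn ys) = [forall i, u < D (ys i)].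
  move=> ys; apply/bigmin_gtP/forallP => [[_ h] i|h]; first exact: h.
  by split => // i _; exact: h.
rewrite -(sum_ge D u s1) -(sum_gt D u s1) -!sum_prod_pred.
rewrite (big_mkcond (fun ys => [forall i, _])) (big_mkcond (fun ys => [forall i, u < _])) /=.
rewrite big_mkcond -sumrB; apply: eq_bigr => ys _.
rewrite -ge -gt /=.
by case: (ltgtP u (mn ys)) => h; rewrite ?subrr ?subr0.
Qed.

Lemma clamp_alg (R : realType) (A B w : R) : 0 < B ->
  B * Num.max 0 (Num.min 1 ((w - A) / B)) = Num.max 0 (w - A) - Num.max 0 (w - (A + B)).
Proof.
move=> B0.
set r := (w - A) / B.
have e : w - A = r * B by rewrite /r divfK // gt_eqF.
have e2 : w - (A + B) = (r - 1) * B by rewrite mulrBl mul1r -e; ring.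
rewrite e e2.
case: (leP r 0) => r0.
  rewrite (max_idPl (_ : Num.min 1 r <= 0)); last by rewrite ge_min r0 orbT.
  rewrite (max_idPl (_ : r * B <= 0)); last by nra.
  rewrite (max_idPl (_ : (r - 1) * B <= 0)); last by nra.
  by rewrite mulr0 subr0.
case: (leP r 1) => r1.
  rewrite (max_idPr (ltW r0)).
  rewrite (max_idPr (_ : 0 <= r * B)); last by nra.
  rewrite (max_idPl (_ : (r - 1) * B <= 0)); last by nra.
  by rewrite subr0 mulrC.
rewrite (max_idPr ler01).
rewrite (max_idPr (_ : 0 <= r * B)); last by nra.
rewrite (max_idPr (_ : 0 <= (r - 1) * B)); last by nra.
ring.
Qed.

Lemma convex_pow (R : realType) (t x : R) (N : nat) : 0 <= t <= 1 -> 0 <= x <= 1 ->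
  ((1 - t) + t * x) ^+ N <= (1 - t) + t * x ^+ N.
Proof.
move=> /andP[t0 t1] /andP[x0 x1].
elim: N => [|N IH]; first by rewrite !expr0; lra.
have xN0 : 0 <= x ^+ N by apply: exprn_ge0.
have xN1 : x ^+ N <= 1 by apply: exprn_ile1.
have z0 : 0 <= (1 - t) + t * x by nra.
rewrite exprS [x ^+ N.+1]exprS.
apply: (le_trans (y := ((1 - t) + t * x) * ((1 - t) + t * x ^+ N))).
  by apply: ler_wpM2l.
have key : (1 - t) + t * (x * x ^+ N) - ((1 - t) + t * x) * ((1 - t) + t * x ^+ N)
   = t * (1 - t) * (1 - x) * (1 - x ^+ N) by ring.
have : 0 <= t * (1 - t) * (1 - x) * (1 - x ^+ N).
  by repeat apply: mulr_ge0; lra.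
lra.
Qed.

Lemma K_nonneg (R : realType) (w a P : R) (n : nat) : 0 < w < 1 -> 0 <= a <= 1 ->
  (1 - w) ^+ n <= P ->
  0 <= Num.max 0 (w - a) / w + (Num.max 0 (1 - a) - Num.max 0 (w - a) / w) * P
       - (1 - a) ^+ n.+1.
Proof.
move=> /andP[w0 w1] /andP[a0 a1] hP.
have hb0 : 0 <= (1 - w) ^+ n by apply: exprn_ge0; lra.
have m1 : Num.max 0 (1 - a) = 1 - a by apply/max_idPr; lra.
rewrite m1.
case: (leP a w) => aw.
  have m2 : Num.max 0 (w - a) = w - a by apply/max_idPr; lra.
  rewrite m2.
  set t := a / w.
  have ea : a = t * w by rewrite /t divfK // gt_eqF.
  have t0 : 0 <= t by rewrite /t divr_ge0 //; lra.
  have t1 : t <= 1 by rewrite /t ler_pdivrMr // mul1r.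
  have e1 : (w - a) / w = 1 - t by rewrite ea -{1}(mul1r w) -mulrBl mulfK // gt_eqF.
  rewrite e1.
  have cv := @convex_pow R t (1 - w) n.+1.
  have : 0 <= t <= 1 by rewrite t0 t1.
  have : 0 <= 1 - w <= 1 by apply/andP; split; lra.
  move=> h1 h2; have {}cv := cv h2 h1.
  have e3 : 1 - a = (1 - t) + t * (1 - w) by rewrite ea; ring.
  rewrite e3; move: cv; rewrite exprS.
  have : (1 - t) + t * (1 - w) - (1 - t) = t * (1 - w) by ring.
  move=> -> cv'.
  have hh : t * (1 - w) * (1 - w) ^+ n <= t * (1 - w) * P.
    by apply: ler_wpM2l => //; apply: mulr_ge0; lra.
  move: cv'; rewrite exprS.
  set z := (1 - t + t * (1 - w)) * (1 - t + t * (1 - w)) ^+ n.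
  move: hh; rewrite -mulrA; set p := (1 - w) ^+ n.
  lra.
have m2 : Num.max 0 (w - a) = 0 by apply/max_idPl; lra.
rewrite m2 mul0r !add0r subr0.
have h : (1 - a) ^+ n <= (1 - w) ^+ n by apply: lerXn2r; rewrite ?nnegrE; lra.
have : 0 <= (1 - a) ^+ n by apply: exprn_ge0; lra.
rewrite exprS; nra.
Qed.

Lemma Hx_formula (R : realType) (Y : finType) (q D : Y -> R) (w : R) :
  (forall y, 0 <= q y) ->
  \sum_y q y * Rintegral (@lebesgue_measure R) `[0%R, 1%R]
      (fun u : R => D y * (if Aq q D (D y) + u * Bq q D (D y) <= w then 1 else 0))
  = \sum_(u <- tl D) u * (Num.max 0 (w - Aq q D u) - Num.max 0 (w - (Aq q D u + Bq q D u))).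
Proof.
move=> q0.
rewrite (group_sum (f:=D) q (fun v => Rintegral (@lebesgue_measure R) `[0%R, 1%R]
      (fun u : R => v * (if Aq q D v + u * Bq q D v <= w then 1 else 0))) (tl_uniq D) (@mem_tl _ _ D)).
apply: eq_bigr => v _.
rewrite -/(Bq q D v).
have := Bq_ge0 D v q0; rewrite le_eqVlt => /orP[/eqP <-|B0].
  by rewrite mul0r addr0 subrr mulr0.
by rewrite rint_formula // mulrCA clamp_alg.
Qed.

Lemma delta_bounds (R : realType) (c A B : R) : 0 <= B ->
  0 <= Num.max 0 (c - A) - Num.max 0 (c - (A + B)) <= B.
Proof.
move=> B0; apply/andP; split.
  case: (leP 0 (c - A)) => h1; case: (leP 0 (c - (A + B))) => h2; lra.
case: (leP 0 (c - A)) => h1; case: (leP 0 (c - (A + B))) => h2; lra.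
Qed.

Lemma sum_comb (R : realType) (s : seq R) (f1 f2 f3 : R -> R) (w P : R) :
  \sum_(i <- s) (f1 i / w + (f2 i - f1 i / w) * P - f3 i)
  = (\sum_(i <- s) f1 i) / w + ((\sum_(i <- s) f2 i) - (\sum_(i <- s) f1 i) / w) * P
    - \sum_(i <- s) f3 i.
Proof.
rewrite sumrB big_split /= -mulr_suml -mulr_suml sumrB -mulr_suml; congr (_ + _ * _ - _).
Qed.

Lemma perx (R : realType) (Y : finType) (q D : Y -> R) (w P : R) (n : nat) :
  (forall y, 0 <= q y) -> \sum_y q y = 1 -> (forall y, 0 <= D y) ->
  0 < w < 1 -> (1 - w) ^+ n <= P ->
  \sum_(u <- tl D) u * ((1 - Aq q D u) ^+ n.+1 - (1 - (Aq q D u + Bq q D u)) ^+ n.+1)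
  <= (\sum_(u <- tl D) u * (Num.max 0 (w - Aq q D u) - Num.max 0 (w - (Aq q D u + Bq q D u)))) / w
   + ((\sum_(u <- tl D) u * (Num.max 0 (1 - Aq q D u) - Num.max 0 (1 - (Aq q D u + Bq q D u))))
      - (\sum_(u <- tl D) u * (Num.max 0 (w - Aq q D u) - Num.max 0 (w - (Aq q D u + Bq q D u)))) / w) * P.
Proof.
move=> q0 s1 D0 hw hP.
set K := fun a : R => Num.max 0 (w - a) / w + (Num.max 0 (1 - a) - Num.max 0 (w - a) / w) * P
       - (1 - a) ^+ n.+1.
have K0 : forall a, 0 <= a <= 1 -> 0 <= K a by move=> a ha; exact: K_nonneg.
have K1 : K 1 = 0.
  have e : Num.max 0 (w - 1) / w + (Num.max 0 (1 - 1) - Num.max 0 (w - 1) / w) * P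
     - (1 - 1) ^+ n.+1 = 0.
    rewrite subrr expr0n /= (max_idPl (_ : w - 1 <= 0)); last by case/andP: hw => _ ?; lra.
    by rewrite (max_idPl (lexx 0)) mul0r subrr mul0r !addr0 subr0.
  exact: e.
have mt : forall u, u \in tl D -> 0 <= u by move=> u /tl_mem[y ->].
have sB : 0 + \sum_(u <- tl D) Bq q D u = 1 by rewrite add0r sumB.
have := abel (tl_sorted D) (fun u _ => Bq_ge0 D u q0) (lexx 0) sB K0 K1 mt.
rewrite mul0r.
under eq_bigr do rewrite !add0r -Aq_tl.
have wn0 : w != 0 by case/andP: hw => w0 _; rewrite gt_eqF.
move=> H; rewrite -subr_ge0; apply: le_trans H _; rewrite le_eqVlt; apply/orP; left; apply/eqP.
rewrite -sum_comb; apply: eq_bigr => i _; rewrite /K /=; ring.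
Qed.

Lemma Hx_pc (R : realType) (X Y : finType) (QY : Y -> R) (d : X -> Y -> R) (x : X) (w : R) :
  (forall y, 0 <= QY y) ->
  \sum_y QY y * Rintegral (@lebesgue_measure R) `[0%R, 1%R]
      (fun u : R => d x y * (if pc QY d x y u <= w then 1 else 0))
  = \sum_(u <- tl (d x)) u * (Num.max 0 (w - Aq QY (d x) u)
        - Num.max 0 (w - (Aq QY (d x) u + Bq QY (d x) u))).
Proof. move=> q0; exact: (Hx_formula (d x) w q0). Qed.

Lemma Dtilde_eq (R : realType) (X Y : finType) (PX : X -> R) (QY : Y -> R) (d : X -> Y -> R) (w : R) :
  (forall y, 0 <= QY y) ->
  Dtilde PX QY d w = w^-1 * \sum_x PX x * \sum_(u <- tl (d x)) u * (Num.max 0 (w - Aq QY (d x) u)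
        - Num.max 0 (w - (Aq QY (d x) u + Bq QY (d x) u))).
Proof.
move=> q0; rewrite /Dtilde; congr (_ * _); apply: eq_bigr => x _.
rewrite -Hx_pc // mulr_sumr; apply: eq_bigr => y _; by rewrite mulrA.
Qed.

Lemma Emin_eq (R : realType) (X Y : finType) (PX : X -> R) (QY : Y -> R) (d : X -> Y -> R) (n : nat) :
  \sum_y QY y = 1 ->
  Emin PX QY d n = \sum_x PX x * \sum_(u <- tl (d x))
     u * ((1 - Aq QY (d x) u) ^+ n.+1 - (1 - (Aq QY (d x) u + Bq QY (d x) u)) ^+ n.+1).
Proof.
move=> s1; rewrite /Emin; apply: eq_bigr => x _.
rewrite -Ex_formula // mulr_sumr; apply: eq_bigr => ys _; by rewrite mulrA.
Qed.

Lemma final_alg (R : realType) (X : finType) (PX Ex Hw H1 : X -> R) (w P dmax e f : R) :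
  (forall x, 0 <= PX x) -> \sum_x PX x = 1 ->
  (forall x, Ex x <= Hw x / w + (H1 x - Hw x / w) * (e * f)) ->
  (forall x, 0 <= Hw x) -> (forall x, H1 x <= dmax) -> 0 < w -> 0 <= e -> 0 <= f ->
  \sum_x PX x * Ex x <= w^-1 * (\sum_x PX x * Hw x)
     + (\sum_x PX x * H1 x - w^-1 * \sum_x PX x * Hw x) * e * f
  /\ w^-1 * (\sum_x PX x * Hw x) + (\sum_x PX x * H1 x - w^-1 * \sum_x PX x * Hw x) * e * f
     <= w^-1 * (\sum_x PX x * Hw x) + dmax * e * f.
Proof.
move=> p0 ps hE hw0 h1 w0 e0 f0; split.
  rewrite -mulrA.
  have -> : w^-1 * (\sum_x PX x * Hw x) + (\sum_x PX x * H1 x - w^-1 * \sum_x PX x * Hw x) * (e * f)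
    = \sum_x PX x * (Hw x / w + (H1 x - Hw x / w) * (e * f)).
    rewrite [RHS](eq_bigr (fun x => PX x * Hw x / w + (PX x * H1 x - PX x * Hw x / w) * (e * f))); last by move=> x _; ring.
    rewrite big_split /= -mulr_suml -mulr_suml sumrB -mulr_suml; ring.
  by apply: ler_sum => x _; apply: ler_wpM2l.
rewrite lerD2l -!mulrA; apply: ler_wpM2r; first exact: mulr_ge0.
have A : 0 <= w^-1 * \sum_x PX x * Hw x.
  by apply: mulr_ge0; [rewrite invr_ge0 ltW | apply: sumr_ge0 => x _; apply: mulr_ge0].
have B : \sum_x PX x * H1 x <= dmax.
  rewrite -[dmax]mul1r -ps mulr_suml; apply: ler_sum => x _; exact: ler_wpM2l.
lra.
Qed.

Unset Implicit Arguments.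
Theorem corollary1 (R : realType) (X Y : finType) (PX : X -> R) (QY : Y -> R)
  (d : X -> Y -> R) (dmax : R) (rate : R) (n : nat) (lambda : R) :
  is_pmf PX -> is_pmf QY ->
  (forall x y, 0 <= d x y) -> (forall x y, d x y <= dmax) ->
  0 <= rate -> expR rate = n%:R ->
  lambda < rate ->
  let w := expR (- (rate - lambda)) in
  Emin PX QY d n <=
    Dtilde PX QY d w
    + (Dtilde PX QY d 1 - Dtilde PX QY d w) * expR (- expR lambda) * (expR lambda + 1)
  /\
  Dtilde PX QY d w
    + (Dtilde PX QY d 1 - Dtilde PX QY d w) * expR (- expR lambda) * (expR lambda + 1)
  <= Dtilde PX QY d w + dmax * expR (- expR lambda) * (expR lambda + 1).
Proof.
move=> [p0 ps1] [q0 qs1] d0 dm r0 en lr w.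
have w0 : 0 < w by apply: expR_gt0.
have w1 : w < 1 by rewrite /w expR_lt1; lra.
have hw : 0 < w < 1 by rewrite w0 w1.
set P := expR (- expR lambda) * (expR lambda + 1).
have P0 : 0 <= P by apply: mulr_ge0; [apply: expR_ge0|]; have := expR_ge0 lambda; lra.
have nw : n%:R * w = expR lambda.
  by rewrite -en /w -expRD; congr expR; ring.
have hP : (1 - w) ^+ n <= P.
  apply: (le_trans (y := expR (- w) ^+ n)).
    apply: lerXn2r; rewrite ?nnegrE; try lra; first by apply: expR_ge0.
    by have := expR_ge1Dx (- w); lra.
  rewrite -expRM_natl mulrN nw /P.
  have := expR_ge0 lambda; have := expR_ge0 (- expR lambda).
  nra.
rewrite !(Dtilde_eq PX d _ q0) Emin_eq // invr1 mul1r.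
apply: (@final_alg R X PX
  (fun x => \sum_(u <- tl (d x)) u * ((1 - Aq QY (d x) u) ^+ n.+1 - (1 - (Aq QY (d x) u + Bq QY (d x) u)) ^+ n.+1))
  (fun x => \sum_(u <- tl (d x)) u * (Num.max 0 (w - Aq QY (d x) u)
        - Num.max 0 (w - (Aq QY (d x) u + Bq QY (d x) u))))
  (fun x => \sum_(u <- tl (d x)) u * (Num.max 0 (1 - Aq QY (d x) u)
        - Num.max 0 (1 - (Aq QY (d x) u + Bq QY (d x) u))))) => //.
- by move=> x; apply: perx.
- move=> x; rewrite big_seq; apply: sumr_ge0 => u /tl_mem[y ->].
  by apply: mulr_ge0 => //; case/andP: (delta_bounds w (Aq QY (d x) (d x y)) (Bq_ge0 (d x) (d x y) q0)).
- move=> x; apply: (le_trans (y := \sum_(u <- tl (d x)) dmax * Bq QY (d x) u)).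
    rewrite big_seq [X in _ <= X]big_seq; apply: ler_sum => u /tl_mem[y ->].
    case/andP: (delta_bounds 1 (Aq QY (d x) (d x y)) (Bq_ge0 (d x) (d x y) q0)) => h1 h2.
    apply: (le_trans (y := d x y * Bq QY (d x) (d x y))); first by apply: ler_wpM2l.
    by apply: ler_wpM2r => //; apply: Bq_ge0.
  by rewrite -mulr_sumr sumB // mulr1.
Qed.
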